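(* Let $n,q_1,\ldots,q_n\in\mathbb{N}$ and let $(\mathfrak{X}_1,\ldots,\mathfrak{X}_n)$ and $(\mathfrak{Y}_1,\ldots,\mathfrak{Y}_n)$ be random vectors supported on $\mathcal{S}_{++}^{q_1}\times\cdots\times\mathcal{S}_{++}^{q_n}$. Then $(\mathfrak{X}_1,\ldots,\mathfrak{X}_n)\preceq_{\mathrm{Lt}}(\mathfrak{Y}_1,\ldots,\mathfrak{Y}_n)$ if and only if \[\mathbb{E}\Big\{\prod_{i=1}^n\phi_i(\mathfrak{X}_i)\Big\}\ge\mathbb{E}\Big\{\prod_{i=1}^n\phi_i(\mathfrak{Y}_i)\Big\}\] for all matrix-variate completely monotone functions $\phi_i:\mathcal{S}_{++}^{q_i}\to[0,\infty)$, $i\in\{1,\ldots,n\}$, whenever the expectations are finite.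
   Context: $\mathcal{S}_+^q$, $\mathcal{S}_{++}^q$ denote the symmetric nonnegative definite and positive definite real $q\times q$ matrices; $\mathrm{etr}(\cdot)=\exp\{\mathrm{tr}(\cdot)\}$. A map $\phi:\mathcal{S}_{++}^q\to[0,\infty)$ is matrix-variate completely monotone if there is a measure $\mu$ on $\mathcal{S}_+^q$ with $\phi(T)=\int_{\mathcal{S}_+^q}\mathrm{etr}(-TX)\,\mu(\mathrm{d}X)$ for all $T\in\mathcal{S}_{++}^q$. For random vectors of matrices $(\mathfrak{X}_1,\ldots,\mathfrak{X}_n)$, $(\mathfrak{Y}_1,\ldots,\mathfrak{Y}_n)$ on $\mathcal{S}_+^{q_1}\times\cdots\times\mathcal{S}_+^{q_n}$, one writes $(\mathfrak{X}_1,\ldots,\mathfrak{X}_n)\preceq_{\mathrm{Lt}}(\mathfrak{Y}_1,\ldots,\mathfrak{Y}_n)$ (matrix-variate Laplace transform order) if $\mathbb{E}\{\prod_{i=1}^n\mathrm{etr}(-T_i\mathfrak{X}_i)\}\ge\mathbb{E}\{\prod_{i=1}^n\mathrm{etr}(-T_i\mathfrak{Y}_i)\}$ for all $T_i\in\mathcal{S}_+^{q_i}$, $i\in\{1,\ldots,n\}$. *)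

(* Defs.v *)
From HB Require Import structures.
From mathcomp Require Import all_boot all_order all_algebra.
From mathcomp Require Import all_classical all_reals all_analysis.
Set Implicit Arguments. Unset Strict Implicit. Unset Printing Implicit Defensive.
Import Order.TTheory GRing.Theory Num.Theory.
Local Open Scope classical_set_scope.
Local Open Scope ring_scope.

(* Real q x q matrices, with the Borel sigma-algebra
   (generated by the entry maps M |-> M i j, i.e. the product = Borel
   sigma-algebra on R^(q x q)). *)
Definition smx (R : realType) (q : nat) : Type := 'M[R]_q.
HB.instance Definition _ (R : realType) (q : nat) := Choice.on (smx R q).
HB.instance Definition _ (R : realType) (q : nat) :=
  @isPointed.Build (smx R q) (0 : 'M[R]_q).

Definition mx_entry_sets (R : realType) (q : nat) : set (set (smx R q)) :=
  [set A | exists (i j : 'I_q) (B : set R),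
      measurable B /\ A = (fun M : 'M[R]_q => M i j) @^-1` B].

HB.instance Definition _ (R : realType) (q : nat) :=
  Measurable.copy (smx R q) (g_sigma_algebraType (@mx_entry_sets R q)).

Definition sym_mx (R : realType) (q : nat) (A : 'M[R]_q) : Prop := A^T = A.

Definition psd (R : realType) (q : nat) : set 'M[R]_q :=
  [set A | sym_mx A /\ forall v : 'cV[R]_q, 0 <= (v^T *m A *m v) 0 0].

Definition pd (R : realType) (q : nat) : set 'M[R]_q :=
  [set A | sym_mx A /\ forall v : 'cV[R]_q, v != 0 -> 0 < (v^T *m A *m v) 0 0].

Definition etr (R : realType) (q : nat) (A : 'M[R]_q) : R := expR (\tr A).

(* matrix-variate complete monotonicity of phi : S_++^q -> [0, oo)
   (phi is given as a total function on matrices; only its values on S_++^q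
   matter): there is a measure mu on S_+^q (a measure on the matrix space,
   restricted to S_+^q) with phi(T) = int_{S_+^q} etr(-T X) mu(dX) for all
   T in S_++^q. *)
Definition mx_completely_monotone (R : realType) (q : nat) (phi : 'M[R]_q -> R) : Prop :=
  exists mu : {measure set (smx R q) -> \bar R},
    forall T : 'M[R]_q, pd T ->
      (phi T)%:E = (\int[mu]_(X in (psd (R := R) (q := q) : set (smx R q)))
                      (etr (- (T *m X)))%:E)%E.

Definition random_mx d (Omega : measurableType d) (R : realType) (q : nat)
    (X : Omega -> smx R q) : Prop := measurable_fun setT X.

Definition lt_order d (Omega : measurableType d) d' (Omega' : measurableType d')
    (R : realType) (P : probability Omega R) (P' : probability Omega' R)
    (n : nat) (q : 'I_n -> nat)
    (X : forall i : 'I_n, Omega -> 'M[R]_(q i))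
    (Y : forall i : 'I_n, Omega' -> 'M[R]_(q i)) : Prop :=
  forall T : forall i : 'I_n, 'M[R]_(q i), (forall i, psd (T i)) ->
    (\int[P']_w (\prod_(i < n) etr (- (T i *m Y i w)))%:E <=
     \int[P]_w (\prod_(i < n) etr (- (T i *m X i w)))%:E)%E.

(* Main.v *)
Require Import Defs.
From HB Require Import structures.
From mathcomp Require Import all_boot all_order all_algebra.
From mathcomp Require Import all_classical all_reals all_analysis.
From mathcomp Require Import ring lra.
From mathcomp Require Import measurable_realfun.
Import Order.TTheory GRing.Theory Num.Theory.
Local Open Scope classical_set_scope.
Local Open Scope ring_scope.
Section MxFacts.
Variable R : realType.
Variable q : nat.
Implicit Types S T : 'M[R]_q.
Implicit Types u v w : 'cV[R]_q.

Definition bil S u w : R := (u^T *m S *m w) 0 0.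

Lemma bilDl S u v w : bil S (u + v) w = bil S u w + bil S v w.
Proof. by rewrite /bil linearD /= !mulmxDl !mxE. Qed.
Lemma bilDr S u v w : bil S w (u + v) = bil S w u + bil S w v.
Proof. by rewrite /bil mulmxDr !mxE. Qed.
Lemma bilZl S a u w : bil S (a *: u) w = a * bil S u w.
Proof. by rewrite /bil linearZ /= -!scalemxAl !mxE. Qed.
Lemma bilZr S a u w : bil S w (a *: u) = a * bil S w u.
Proof. by rewrite /bil -!scalemxAr !mxE. Qed.
Lemma bil_delta S i j : bil S (delta_mx i 0) (delta_mx j 0) = S i j.
Proof. by rewrite /bil trmx_delta -rowE -colE !mxE. Qed.
Lemma bil_sym S u w : S^T = S -> bil S u w = bil S w u.
Proof.
move=> sS; rewrite /bil -[in LHS](trmxK (u^T *m S *m w)) mxE.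
by rewrite !trmx_mul sS trmxK mulmxA.
Qed.

Lemma psd_diag0 S i j : psd S -> S j j = 0 -> S i j = 0.
Proof.
move=> [sS pS] Sjj; apply/eqP/negPn/negP => Sij.
set t := - (S i i + 1) / (2 * S i j).
have := pS (delta_mx i 0 + t *: delta_mx j 0).
rewrite -/(bil S _ _) !(bilDl, bilDr, bilZl, bilZr) !bil_delta Sjj.

have -> : S j i = S i j by rewrite -[in LHS]sS mxE.
have -> : S i i + t * S i j + (t * S i j + t * (t * 0)) = -1.
  rewrite /t mulr0 mulr0 addr0; by field.
lra.
Qed.

Lemma sym_entry S i j : S^T = S -> S j i = S i j.
Proof. by move=> sS; rewrite -[in LHS]sS mxE. Qed.

Definition schur S j := S - (S j j)^-1 *: (col j S *m row j S).

Lemma schurE S j a b : schur S j a b = S a b - (S j j)^-1 * (S a j * S j b).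
Proof. by rewrite /schur !mxE big_ord1 !mxE. Qed.

Lemma schur_sym S j : S^T = S -> (schur S j)^T = schur S j.
Proof.
move=> sS; apply/matrixP => a b; rewrite mxE !schurE.
by rewrite (sym_entry _ a b sS) (sym_entry _ j b sS) (sym_entry _ a j sS) [S j b * _]mulrC.
Qed.

Lemma mx11_mul (A B : 'M[R]_1) : (A *m B) 0 0 = A 0 0 * B 0 0.
Proof. by rewrite mxE big_ord1. Qed.

Lemma bil_schur S j v :
  bil (schur S j) v v = bil S v v - (S j j)^-1 * (bil S v (delta_mx j 0) * bil S (delta_mx j 0) v).
Proof.
have E : v^T *m (col j S *m row j S) *m v =
   (v^T *m S *m (delta_mx j 0 : 'cV[R]_q)) *m ((delta_mx j 0 : 'cV[R]_q)^T *m S *m v).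
  by rewrite colE (rowE j S) trmx_delta !mulmxA.
rewrite /bil /schur mulmxBr mulmxBl -scalemxAr -scalemxAl E.
by rewrite [LHS]mxE [X in _ + X]mxE [X in _ - X]mxE mx11_mul.
Qed.

Lemma schur_psd S j : psd S -> 0 < S j j -> psd (schur S j).
Proof.
move=> [sS pS] aj; split; first exact: schur_sym.
move=> v; rewrite -/(bil _ _ _) bil_schur.
set e := delta_mx j 0 : 'cV[R]_q.
set beta := bil S v e.
have be : bil S e v = beta by rewrite /beta bil_sym.
set t := beta / S j j.
have := pS (v + (- t) *: e); rewrite -/(bil _ _ _).
rewrite !(bilDl, bilDr, bilZl, bilZr) be -/beta /e bil_delta.
have -> : bil S v v + - t * beta + (- t * beta + - t * (- t * S j j))
   = bil S v v - (S j j)^-1 * (beta * beta).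
  by rewrite /t; field; rewrite gt_eqF.
by [].
Qed.

Lemma tr_schur T S j : S^T = S ->
  \tr (T *m schur S j) = \tr (T *m S) - (S j j)^-1 * bil T (col j S) (col j S).
Proof.
move=> sS; rewrite /schur mulmxBr -scalemxAr linearB /= mxtraceZ.
congr (_ - _ * _).
rewrite mulmxA mxtrace_mulC /mxtrace big_ord1 /bil mulmxA.
by rewrite tr_col sS.
Qed.

Lemma psd_diag_ge0 S j : psd S -> 0 <= S j j.
Proof. by move=> [_ pS]; have := pS (delta_mx j 0); rewrite -/(bil _ _ _) bil_delta. Qed.

Lemma schur_diag S j a : psd S -> 0 < S j j -> schur S j a a != 0 -> (a != j) && (S a a != 0).
Proof.
move=> pS Sj; rewrite schurE => H; apply/andP; split.
  by apply: contra H => /eqP ->; rewrite mulKf ?subrr // gt_eqF.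
apply: contra H => /eqP Sa.
by rewrite Sa (psd_diag0 _ j a pS Sa) !mulr0 subrr.
Qed.

Lemma tr_psd_ge0 T S : psd T -> psd S -> 0 <= \tr (T *m S).
Proof.
move=> pT pS.
suff H : forall m S, psd S -> (#|[pred a | S a a != 0%R]| <= m)%N -> 0 <= \tr (T *m S).
  exact: (H _ _ pS (leqnn _)).
elim=> [|m IH] {}S {}pS.
  rewrite leqn0 => /eqP/card0_eq Z.
  have -> : S = 0.
    apply/matrixP => i j; rewrite mxE; apply: (psd_diag0 _ i _ pS).
    by have := Z j; rewrite !inE => /negbFE/eqP.
  by rewrite mulmx0 mxtrace0.
move=> Hc.
have [/existsP [j Sj]|/existsP Z] := boolP [exists j, S j j != 0]; last first.
  have -> : S = 0.
    apply/matrixP => i j; rewrite mxE; apply: (psd_diag0 _ i _ pS).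
    by apply/eqP; apply/negPn/negP => h; apply: Z; exists j.
  by rewrite mulmx0 mxtrace0.
have {}Sj : 0 < S j j by rewrite lt_def Sj psd_diag_ge0.
rewrite -[\tr (T *m S)](subrK ((S j j)^-1 * bil T (col j S) (col j S))).
rewrite -tr_schur; last by case: pS.
apply: addr_ge0.
  apply: IH; first exact: schur_psd.
  rewrite -ltnS; apply: leq_trans Hc.
  apply: proper_card; apply/properP; split.
    by apply/fintype.subsetP => a; rewrite !inE => /(schur_diag _ _ _ pS Sj) /andP[].
  apply: (@ex_intro2 _ _ _ j); first by rewrite inE gt_eqF.
  by rewrite inE schurE mulKf ?subrr ?eqxx // gt_eqF.
apply: mulr_ge0; first by rewrite invr_ge0 ltW.
by case: pT => _; apply.
Qed.
End MxFacts.
Arguments bil {R q}.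
Arguments tr_psd_ge0 {R q}.
Set Implicit Arguments. Unset Strict Implicit. Unset Printing Implicit Defensive.
Section Meas.
Variable R : realType.

Lemma meas_entry q (i j : 'I_q) : measurable_fun setT (fun M : smx R q => M i j).
Proof.
move=> _ B mB; rewrite setTI; apply: sub_gen_smallest.
by exists i, j, B.
Qed.

Definition mxmeas (d : measure_display) (T : measurableType d) m n (F : T -> 'M[R]_(m, n)) :=
  forall i j, measurable_fun setT (fun t => F t i j).

Lemma mxmeas_smx q : mxmeas (fun M : smx R q => (M : 'M[R]_q)).
Proof. by move=> i j; apply: meas_entry. Qed.

Lemma mxmeas_comp (d : measure_display) (T : measurableType d) q (Z : T -> smx R q) :
  measurable_fun setT Z -> mxmeas (fun t => (Z t : 'M[R]_q)).
Proof. by move=> mZ i j; apply: (measurableT_comp (meas_entry i j) mZ). Qed.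

Lemma mxmeas_cst (d : measure_display) (T : measurableType d) m n (A : 'M[R]_(m, n)) : mxmeas (fun _ : T => A).
Proof. by move=> i j; apply: measurable_cst. Qed.

Lemma mxmeas_mul (d : measure_display) (T : measurableType d) m n p (F : T -> 'M[R]_(m, n)) (G : T -> 'M[R]_(n, p)) :
  mxmeas F -> mxmeas G -> mxmeas (fun t => F t *m G t).
Proof.
move=> mF mG i j; rewrite /=.
have -> : (fun t => (F t *m G t) i j) = (fun t => \sum_(k < n) F t i k * G t k j).
  by apply/funext => t; rewrite mxE.
by apply: measurable_sum => k; apply: measurable_funM.
Qed.

Lemma mxmeas_opp (d : measure_display) (T : measurableType d) m n (F : T -> 'M[R]_(m, n)) :
  mxmeas F -> mxmeas (fun t => - F t).
Proof.
move=> mF i j; have -> : (fun t => (- F t) i j) = (fun t => - F t i j).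
  by apply/funext => t; rewrite mxE.
exact: measurable_funN.
Qed.

Lemma tr_meas (d : measure_display) (T : measurableType d) q (F : T -> 'M[R]_q) :
  mxmeas F -> measurable_fun setT (fun t => \tr (F t)).
Proof. by move=> mF; apply: measurable_sum => i; apply: mF. Qed.

Lemma etr_meas (d : measure_display) (T : measurableType d) q (F : T -> 'M[R]_q) :
  mxmeas F -> measurable_fun setT (fun t => etr (F t)).
Proof. move=> mF; have := measurableT_comp (@measurable_expR R) (tr_meas mF). by []. Qed.

Lemma mxmeas_fst (d1 d2 : measure_display) (T1 : measurableType d1) (T2 : measurableType d2) m n (F : T1 -> 'M[R]_(m, n)) :
  mxmeas F -> mxmeas (fun z : T1 * T2 => F z.1).
Proof. by move=> mF i j; apply: (measurableT_comp (mF i j) measurable_fst). Qed.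

Lemma mxmeas_snd (d1 d2 : measure_display) (T1 : measurableType d1) (T2 : measurableType d2) m n (F : T2 -> 'M[R]_(m, n)) :
  mxmeas F -> mxmeas (fun z : T1 * T2 => F z.2).
Proof. by move=> mF i j; apply: (measurableT_comp (mF i j) measurable_snd). Qed.


Lemma bilE q (A : 'M[R]_q) u w :
  bil A u w = \sum_(b < q) (\sum_(a < q) u a 0 * A a b) * w b 0.
Proof.
rewrite /bil mxE; apply: eq_bigr => b _; rewrite mxE; congr (_ * _).
by apply: eq_bigr => a _; rewrite mxE.
Qed.

Lemma bil_meas q (u w : 'cV[R]_q) : measurable_fun setT (fun A : smx R q => bil A u w).
Proof.
have -> : (fun A : smx R q => bil A u w) =
   (fun A : smx R q => \sum_(b < q) (\sum_(a < q) u a 0 * A a b) * w b 0).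
  by apply/funext => A; rewrite bilE.
apply: measurable_sum => b; apply: measurable_funM => //.
apply: measurable_sum => a; apply: measurable_funM => //.
exact: meas_entry.
Qed.

Lemma psd_rat q (A : 'M[R]_q) :
  (forall u : 'cV[rat]_q, 0 <= bil A (map_mx ratr u) (map_mx ratr u)) ->
  forall v, 0 <= bil A v v.
Proof.
move=> H.
suff P : forall k, (k <= q)%N -> forall v : 'cV[R]_q,
    (forall j : 'I_q, (k <= j)%N -> exists r : rat, v j 0 = ratr r) -> 0 <= bil A v v.
  by move=> v; apply: (P q (leqnn q)) => j; rewrite leqNgt ltn_ord.
elim=> [_|k IH kq] v Hv.
  have [f Hf] := choice (fun j => Hv j (leq0n j)).
  have -> : v = map_mx ratr (\col_j f j).
    by apply/matrixP => i j; rewrite (ord1 j) !mxE Hf.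
  exact: H.
set jk : 'I_q := Ordinal kq.
rewrite leNgt; apply/negP => Q0.
set e := delta_mx jk 0 : 'cV[R]_q.
set Q := bil A v v.
set b := bil A v e + bil A e v.
set c := A jk jk.
set B := `|b| + `|c|.
have B0 : 0 <= B by rewrite addr_ge0.
set dl := Num.min 1 (- Q / (B + 1)).
have dl0 : 0 < dl.
  rewrite lt_min ltr01 /=; apply: divr_gt0; first by rewrite oppr_gt0.
  by rewrite ltr_wpDl.
have dl1 : dl <= 1 by rewrite ge_min lexx.
have dl2 : dl * (B + 1) <= - Q.
  by rewrite -ler_pdivlMr ?ltr_wpDl // ge_min lexx orbT.
have [r] := rat_in_itvoo (ltr_pwDr dl0 (lexx (v jk 0))).
rewrite in_itv /= => /andP[r1 r2].
set h := ratr r - v jk 0.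
have h0 : 0 < h by rewrite /h; lra.
have hdl : h < dl by rewrite /h; lra.
have := IH (ltnW kq) (v + h *: e).
have hyp : forall j : 'I_q, (k <= j)%N -> exists r0 : rat, (v + h *: e) j 0 = ratr r0.
  move=> j kj; rewrite !mxE; have [jE|njk] := eqVneq j jk.
    by exists r; rewrite jE eqxx /= mulr1 /h addrC subrK.
  have kj' : (k < j)%N.
    rewrite ltn_neqAle kj andbT; apply/eqP => E; move/eqP: njk; apply; apply: val_inj; by rewrite /= -E.
  have [r0 ->] := Hv j kj'; exists r0.
  by rewrite mulr0 addr0.
move=> /(_ hyp).
rewrite !(bilDl, bilDr, bilZl, bilZr) -/Q /e bil_delta -/c.
have hb : h * bil A v e + h * bil A e v <= h * `|b|.
  by rewrite -mulrDr; apply: ler_wpM2l; [exact: ltW | exact: ler_norm].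
have hc : h * (h * c) <= h * `|c|.
  apply: ler_wpM2l; first exact: ltW.
  apply: le_trans (ler_wpM2l (ltW h0) (ler_norm c)) _.
  by rewrite ler_piMl // ltW // (lt_le_trans hdl dl1).
have hB : h * B <= dl * B by apply: ler_wpM2r; [exact: B0 | exact: ltW].
have e1 : h * B = h * `|b| + h * `|c| by rewrite mulrDr.
have e2 : dl * (B + 1) = dl * B + dl by rewrite mulrDr mulr1.
rewrite /e in hb; lra.
Qed.

Lemma preimT_meas (d : measure_display) (T : measurableType d) (f : T -> R) (B : set R) :
  measurable_fun setT f -> measurable B -> measurable (f @^-1` B).
Proof. by move=> mf mB; rewrite -[X in measurable X]setTI; apply: mf. Qed.

Definition psdS q : set (smx R q) := psd (R := R) (q := q).
Arguments psdS : clear implicits.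

Lemma psd_meas q : measurable (psdS q).
Proof.
pose G := fun n => match (unpickle n : option ('I_q * 'I_q)) with
  | Some p => [set A : smx R q | A p.1 p.2 = A p.2 p.1] | None => setT end.
pose F := fun n => match (unpickle n : option 'cV[rat]_q) with
  | Some u => [set A : smx R q | 0 <= bil A (map_mx ratr u) (map_mx ratr u)]
  | None => setT end.
have -> : psdS q = \bigcap_n G n `&` \bigcap_n F n.
  apply/seteqP; split => A.
    move=> [sA pA]; split => n _; rewrite /G /F; case: unpickle => // p /=.
      by rewrite -[in LHS]sA mxE.
    exact: pA.
  move=> [HG HF]; split.
    apply/matrixP => i j; rewrite mxE.
    by have := HG (pickle (j, i)) I; rewrite /G pickleK.
  apply: psd_rat => u.
  by have := HF (pickle u) I; rewrite /F pickleK.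
apply: measurableI; apply: bigcapT_measurable => n.
  rewrite /G; case: unpickle => [[i j]|] //=.
  have -> : [set A : smx R q | A i j = A j i] =
      (fun A : smx R q => A i j - A j i) @^-1` [set 0].
    by apply/seteqP; split => A /= h; [rewrite h subrr | apply/eqP; rewrite -subr_eq0; apply/eqP].
  apply: preimT_meas; last exact: measurable_set1.
  by apply: measurable_funB; apply: meas_entry.
rewrite /F; case: unpickle => [u|] //=.
have -> : [set A : smx R q | 0 <= bil A (map_mx ratr u) (map_mx ratr u)] =
    (fun A : smx R q => bil A (map_mx ratr u) (map_mx ratr u)) @^-1` [set` `[0, +oo[%R].
  by apply/seteqP; split => A /=; rewrite in_itv /= andbT.
apply: preimT_meas; last exact: measurable_itv.
exact: bil_meas.
Qed.
End Meas.
Arguments psdS : clear implicits.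
Section CM.
Variable R : realType.
Local Open Scope ereal_scope.

Definition cmfin q (mu : {measure set smx R q -> \bar R}) :=
  \int[mu]_(X in psdS R q) (etr (- (1%:M *m X)))%:E < +oo.

Lemma etr1 q (X : 'M[R]_q) : etr (- (1%:M *m X)) = expR (- \tr X).
Proof. by rewrite /etr mul1mx linearN. Qed.

Lemma nu_sigma q (mu : {measure set smx R q -> \bar R}) :
  cmfin mu -> sigma_finite setT (mrestr mu (@psd_meas R q)).
Proof.
move=> fin.
pose F := fun n : nat => ~` psdS R q `|` [set X : smx R q | \tr X <= n%:R]%R.
have mtr : measurable_fun setT (fun X : smx R q => \tr (X : 'M[R]_q)).
  exact: (tr_meas (@mxmeas_smx R q)).
have mA n : measurable [set X : smx R q | \tr X <= n%:R]%R.
  have -> : [set X : smx R q | \tr X <= n%:R]%R =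
      (fun X : smx R q => \tr (X : 'M[R]_q)) @^-1` [set` `]-oo, n%:R]%R].
    by apply/seteqP; split => X /=; rewrite in_itv.
  by apply: preimT_meas => //; exact: measurable_itv.
have mF n : measurable (F n) by apply: measurableU => //; apply: measurableC; exact: (@psd_meas R q).
exists F.
  apply/seteqP; split => // X _.
  have [pX|npX] := pselect (psdS R q X); last by exists 0%N => //; left.
  exists (Num.Def.archi_bound `|\tr (X : 'M[R]_q)|)%R => //; right => /=.
  apply: ltW; apply: le_lt_trans (ler_norm _) _.
  exact: archi_boundP.
move=> n; split => //.
rewrite /mrestr.
have -> : F n `&` psdS R q = psdS R q `&` [set X : smx R q | \tr X <= n%:R]%R.
  apply/seteqP; split => X; rewrite /F /=.
    by move=> [[?|?] ?].
  by move=> [? ?]; split => //; right.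
set A := _ `&` _.
have mAs : measurable A by apply: measurableI => //; exact: (@psd_meas R q).
have le1 : (expR (- n%:R))%:E * mu A <= \int[mu]_(X in psdS R q) (etr (- (1%:M *m X)))%:E.
  rewrite -integral_cst //.
  apply: le_trans (ge0_subset_integral mu mAs (@psd_meas R q) _ _ _); last 3 first.
  - apply/measurable_EFinP; apply: measurable_funTS; apply: etr_meas.
    apply: mxmeas_opp; apply: mxmeas_mul; [exact: mxmeas_cst | exact: mxmeas_smx].
  - by move=> X _; rewrite lee_fin expR_ge0.
  - by move=> X [].
  apply: ge0_le_integral => //.
  - by move=> X _; rewrite lee_fin expR_ge0.
  - apply/measurable_EFinP; apply: measurable_funTS; apply: etr_meas.
    apply: mxmeas_opp; apply: mxmeas_mul; [exact: mxmeas_cst | exact: mxmeas_smx].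
  - move=> X [_ hX]; rewrite lee_fin etr1 ler_expR lerN2 //.
have {}le1 := le_lt_trans le1 fin.
rewrite ltNge; apply/negP => H.
have muA : mu A = +oo by apply/eqP; rewrite eq_le leey H.
by rewrite muA muleC gt0_mulye ?lte_fin ?expR_gt0 // ltxx in le1.
Qed.

Definition nuS q (mu : {measure set smx R q -> \bar R}) (h : cmfin mu) :
    {sigma_finite_measure set smx R q -> \bar R} :=
  HB.pack_for (SigmaFiniteMeasure.type (smx R q) R) (mrestr mu (@psd_meas R q))
     (isSFinite.Build _ _ _ _ (sfinite_measure_sigma_finite (nu_sigma h)))
     (isSigmaFinite.Build _ _ _ _ (nu_sigma h)).

Lemma nuS_int q (mu : {measure set smx R q -> \bar R}) (h : cmfin mu) (f : smx R q -> \bar R) :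
  \int[mu]_(X in psdS R q) f X = \int[nuS h]_X (f \_ (psdS R q)) X.
Proof.
rewrite -integral_mkcond; apply: eq_measure_integral => A mA AP.
by rewrite /= /mrestr setIidl.
Qed.

Definition Fz (d : measure_display) (Om : measurableType d) q (Z : Om -> smx R q) (g : Om -> R) :=
  fun z : Om * smx R q =>
  ((fun X => (g z.1 * etr (- (Z z.1 *m X)))%:E) \_ (psdS R q)) z.2.

Lemma Fz_meas (d : measure_display) (Om : measurableType d) q
  (Z : Om -> smx R q) (mZ : measurable_fun setT Z)
  (g : Om -> R) (mg : measurable_fun setT g) (g0 : forall w, (0 <= g w)%R) :
  measurable_fun setT (Fz Z g) /\ forall z, 0 <= Fz Z g z.
Proof.
have FE : Fz Z g = EFin \o (fun z => g z.1 * etr (- (Z z.1 *m z.2)) * \1_(psdS R q) z.2)%R.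
  apply/funext => z; rewrite /Fz patchE /= indicE.
  by case: ifPn => _; rewrite ?mulr1 ?mulr0.
split.
  rewrite FE; apply/measurable_EFinP.
  apply: measurable_funM; first apply: measurable_funM.
  - exact: (measurableT_comp mg measurable_fst).
  - apply: etr_meas; apply: mxmeas_opp; apply: mxmeas_mul.
      by apply: mxmeas_fst; apply: mxmeas_comp.
    exact: (mxmeas_snd (T1 := Om) (@mxmeas_smx R q)).
  - exact: (measurableT_comp (measurable_indic (@psd_meas R q)) measurable_snd).
move=> z; rewrite FE /= lee_fin; apply: mulr_ge0; last by rewrite indicE.
by apply: mulr_ge0 => //; rewrite expR_ge0.
Qed.

Lemma swap (d : measure_display) (Om : measurableType d)
  (P : {sigma_finite_measure set Om -> \bar R}) q
  (mu : {measure set smx R q -> \bar R}) (h : cmfin mu)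
  (Z : Om -> smx R q) (mZ : measurable_fun setT Z)
  (g : Om -> R) (mg : measurable_fun setT g) (g0 : forall w, (0 <= g w)%R) :
  \int[P]_w \int[mu]_(X in psdS R q) (g w * etr (- (Z w *m X)))%:E
  = \int[mu]_(X in psdS R q) \int[P]_w (g w * etr (- (Z w *m X)))%:E.
Proof.
under eq_integral => w _ do rewrite (nuS_int h).
rewrite (nuS_int h).
have [mF F0] := Fz_meas mZ mg g0.
have := @fubini_tonelli _ _ _ _ R P (nuS h) _ mF F0.
rewrite /Fz /= => ->.
apply: eq_integral => X _; rewrite patchE; case: ifPn => XP.
  by apply: eq_integral => w _; rewrite patchE XP.
by rewrite integral0_eq // => w _; rewrite patchE (negbTE XP).
Qed.

Local Close Scope ereal_scope.
Lemma pd_psd q (S : 'M[R]_q) : pd S -> psd S.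
Proof.
move=> [sS pS]; split => // v; have [->|v0] := eqVneq v 0%R.
  by rewrite mulmx0 mxE.
exact: ltW (pS v v0).
Qed.

Lemma pd1 q : pd (1%:M : 'M[R]_q).
Proof.
split; first by rewrite /sym_mx trmx1.
move=> v v0; rewrite mulmx1.
have [i vi] : exists i, v i 0 != 0%R.
  apply/not_existsP => H; move/eqP: v0; apply; apply/matrixP => i j.
  by rewrite (ord1 j) mxE; apply/eqP; apply/negP => /negP; apply: H.
rewrite mxE (bigD1 i) //= mxE; apply: ltr_wpDr.
  by apply: sumr_ge0 => j _; rewrite mxE; nra.
by move: vi; rewrite neq_lt => /orP[] ?; nra.
Qed.

Local Open Scope ereal_scope.
Lemma cm_fin q (phi : 'M[R]_q -> R) (mu : {measure set smx R q -> \bar R}) :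
  (forall T : 'M[R]_q, pd T -> (phi T)%:E =
      \int[mu]_(X in psdS R q) (etr (- (T *m X)))%:E) -> cmfin mu.
Proof. by move=> H; rewrite /cmfin -H ?ltry //; exact: pd1. Qed.

Lemma cm_meas (d : measure_display) (Om : measurableType d) q (phi : 'M[R]_q -> R)
  (Hphi : mx_completely_monotone phi)
  (Z : Om -> smx R q) (mZ : measurable_fun setT Z) (pdZ : forall w, pd (Z w)) :
  measurable_fun setT (fun w => phi (Z w)).
Proof.
have [mu Hmu] := Hphi.
have h : cmfin mu := cm_fin Hmu.
apply/measurable_EFinP.
have [mF F0] := Fz_meas mZ (measurable_cst (1%R : R)) (fun _ => ler01).
have -> : EFin \o (fun w => phi (Z w)) = fubini_F (nuS h) (Fz Z (fun _ => 1%R)).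
  apply/funext => w; rewrite /fubini_F /= Hmu // (nuS_int h).
  by apply: eq_integral => X _; rewrite /Fz /= !patchE mul1r.
exact: (measurable_fun_fubini_tonelli_F _ mF F0).
Qed.

Lemma cm_ge0 q (phi : 'M[R]_q -> R) (Hphi : mx_completely_monotone phi) S :
  pd S -> (0 <= phi S)%R.
Proof.
move=> pS; have [mu Hmu] := Hphi; rewrite -lee_fin Hmu //.
by apply: integral_ge0 => X _; rewrite lee_fin expR_ge0.
Qed.
End CM.

Section Main.
Variable R : realType.
Local Open Scope ereal_scope.

Lemma le_integral_nm (d : measure_display) (T : measurableType d)
  (mu : {measure set T -> \bar R}) (D : set T) (f1 f2 : T -> \bar R) :
  (forall x, D x -> 0 <= f1 x) -> (forall x, D x -> f1 x <= f2 x) ->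
  \int[mu]_(x in D) f1 x <= \int[mu]_(x in D) f2 x.
Proof.
move=> f10 f12; rewrite !ge0_integralE //; last first.
  by move=> x Dx; apply: le_trans (f10 _ Dx) (f12 _ Dx).
apply: ereal_sup_le => _ [h /= hf <-]; exists h => //= x.
apply: le_trans (hf x) _; rewrite !patchE; case: ifPn => // /set_mem Dx.
exact: f12.
Qed.

Definition etrf m (T : 'M[R]_m) : 'M[R]_m -> R := fun S => etr (- (T *m S)).

Lemma etr_C m (A B : 'M[R]_m) : etr (- (A *m B)) = etr (- (B *m A)).
Proof. by rewrite /etr !linearN /= mxtrace_mulC. Qed.

Variables (n : nat) (q : 'I_n -> nat).

Definition EZ (d : measure_display) (Om : measurableType d) (P : {measure set Om -> \bar R})
  (Z : forall i, Om -> smx R (q i)) (psi : forall i : 'I_n, 'M[R]_(q i) -> R) :=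
  \int[P]_w (\prod_(i < n) psi i (Z i w))%:E.

Definition good k (psi : forall i : 'I_n, 'M[R]_(q i) -> R) :=
  (forall i : 'I_n, (i < k)%N -> mx_completely_monotone (psi i)) /\
  (forall i : 'I_n, (k <= i)%N -> exists2 T, psd T & psi i = etrf T).

Lemma good_ge0 k psi (gk : good k psi) i S : pd S -> (0 <= psi i S)%R.
Proof.
move=> pS; have [ik|ki] := ltnP i k.
  exact: (cm_ge0 (gk.1 i ik)).
have [T _ ->] := gk.2 i ki.
by rewrite /etrf /etr expR_ge0.
Qed.

Lemma good_meas k psi (gk : good k psi) (d : measure_display) (Om : measurableType d)
  (Z : forall i, Om -> smx R (q i)) (mZ : forall i, measurable_fun setT (Z i))
  (pdZ : forall i w, pd (Z i w)) i : measurable_fun setT (fun w => psi i (Z i w)).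
Proof.
have [ik|ki] := ltnP i k.
  exact: (cm_meas (gk.1 i ik) (mZ i) (pdZ i)).
have [T _ ->] := gk.2 i ki.
apply: etr_meas; apply: mxmeas_opp; apply: mxmeas_mul; first exact: mxmeas_cst.
exact: mxmeas_comp.
Qed.

Lemma decomp (d : measure_display) (Om : measurableType d)
  (P : {sigma_finite_measure set Om -> \bar R})
  (Z : forall i, Om -> smx R (q i)) (mZ : forall i, measurable_fun setT (Z i))
  (psi : forall i : 'I_n, 'M[R]_(q i) -> R) (ko : 'I_n)
  (mpsi : forall i, i != ko -> measurable_fun setT (fun w => psi i (Z i w)))
  (psi0 : forall i w, i != ko -> (0 <= psi i (Z i w))%R)
  (pdZ : forall w, pd (Z ko w))
  (mu : {measure set smx R (q ko) -> \bar R})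
  (Hmu : forall T : 'M[R]_(q ko), pd T -> (psi ko T)%:E =
      \int[mu]_(X in psdS R (q ko)) (etr (- (T *m X)))%:E) :
  EZ P Z psi = \int[mu]_(T in psdS R (q ko)) EZ P Z (dfwith psi ko (etrf T)).
Proof.
have h : cmfin mu := cm_fin Hmu.
pose g := fun w => (\prod_(i < n | i != ko) psi i (Z i w))%R.
have mg : measurable_fun setT g.
  have -> : g = (fun w => \prod_(i <- index_enum 'I_n) (if i != ko then psi i (Z i w) else 1))%R.
    by apply/funext => w; rewrite /g (big_mkcond (fun i : 'I_n => i != ko)).
  apply: measurable_prod => i _; have [ni|ni] := boolP (i != ko).
    exact: mpsi.
  exact: measurable_cst.
have g0 : forall w, (0 <= g w)%R.
  by move=> w; apply: prodr_ge0 => i ni; apply: psi0.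
have metr : forall w, measurable_fun (psdS R (q ko)) (fun X : smx R (q ko) => (etr (- (Z ko w *m X)))%:E).
  move=> w; apply/measurable_EFinP; apply: measurable_funTS.
  apply: etr_meas; apply: mxmeas_opp; apply: mxmeas_mul; first exact: mxmeas_cst.
  exact: mxmeas_smx.
transitivity (\int[P]_w \int[mu]_(X in psdS R (q ko)) (g w * etr (- (Z ko w *m X)))%:E).
  apply: eq_integral => w _; rewrite (bigD1 ko) //= mulrC EFinM Hmu //.
  rewrite -ge0_integralZl_EFin //.
  - exact: psd_meas.
  - by move=> X _; rewrite lee_fin /etr expR_ge0.
  - exact: g0.
apply: (etrans (swap P h (mZ ko) mg g0)).
apply: eq_integral => T _; apply: eq_integral => w _.
rewrite (bigD1 ko) //= dfwithin mulrC /etrf etr_C; congr (_ * _)%:E.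
by apply: eq_bigr => i ni; rewrite dfwithout // eq_sym.
Qed.

Lemma good_upd k (kn : (k < n)%N) psi (gk : good k.+1 psi) (T : 'M[R]_(q (Ordinal kn))) :
  psd T -> good k (dfwith psi (Ordinal kn) (etrf T)).
Proof.
move=> pT; split.
  move=> i ik; rewrite dfwithout; first exact: gk.1 i (ltnW ik).
  by apply/eqP => E; move: ik; rewrite -E /= ltnn.
move=> i ki; have [E|ni] := eqVneq (Ordinal kn) i.
  by rewrite -E dfwithin; exists T.
rewrite dfwithout //; apply: gk.2.
rewrite ltn_neqAle ki andbT; apply/eqP => E; move/eqP: ni; apply.
by apply: val_inj; rewrite /= E.
Qed.

Lemma main_ind (d : measure_display) (Om : measurableType d)
  (P : {sigma_finite_measure set Om -> \bar R})
  (d' : measure_display) (Om' : measurableType d')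
  (P' : {sigma_finite_measure set Om' -> \bar R})
  (X : forall i, Om -> smx R (q i)) (Y : forall i, Om' -> smx R (q i))
  (mX : forall i, measurable_fun setT (X i)) (mY : forall i, measurable_fun setT (Y i))
  (pdX : forall i w, pd (X i w)) (pdY : forall i w, pd (Y i w))
  (lt : forall T : forall i : 'I_n, 'M[R]_(q i), (forall i, psd (T i)) ->
     EZ P' Y (fun i => etrf (T i)) <= EZ P X (fun i => etrf (T i))) :
  forall k, (k <= n)%N -> forall psi, good k psi -> EZ P' Y psi <= EZ P X psi.
Proof.
elim=> [_ psi [_ H]|k IH kn psi gk].
  pose Tf := fun i => s2val (cid2 (H i (leq0n i))).
  have -> : psi = fun i => etrf (Tf i).
    by apply: functional_extensionality_dep => i; rewrite /Tf; case: cid2.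
  by apply: lt => i; rewrite /Tf; case: cid2.
set ko := Ordinal kn.
have [mu Hmu] := gk.1 ko (ltnSn k).
have mpsiX i : i != ko -> measurable_fun setT (fun w => psi i (X i w)).
  by move=> _; exact: (good_meas gk mX pdX).
have mpsiY i : i != ko -> measurable_fun setT (fun w => psi i (Y i w)).
  by move=> _; exact: (good_meas gk mY pdY).
have psiX0 i w : i != ko -> (0 <= psi i (X i w))%R.
  by move=> _; exact: (good_ge0 gk).
have psiY0 i w : i != ko -> (0 <= psi i (Y i w))%R.
  by move=> _; exact: (good_ge0 gk).
rewrite (decomp P mX mpsiX psiX0 (pdX ko) Hmu) (decomp P' mY mpsiY psiY0 (pdY ko) Hmu).
apply: le_integral_nm.
  move=> T pT; apply: integral_ge0 => w _; rewrite lee_fin.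
  apply: prodr_ge0 => i _; exact: (good_ge0 (good_upd gk pT)).
move=> T pT; apply: IH (ltnW kn) _ (good_upd gk pT).
Qed.
End Main.

Lemma etr_le1 (R : realType) m (T S : 'M[R]_m) : psd T -> pd S -> (0 <= etrf T S <= 1)%R.
Proof.
move=> pT pS; rewrite /etrf /etr expR_ge0 /= expR_le1 linearN /= oppr_le0.
exact: tr_psd_ge0 pT (pd_psd pS).
Qed.

Lemma fin_etr (R : realType) (d : measure_display) (Om : measurableType d) (P : probability Om R)
  (n : nat) (q : 'I_n -> nat) (T : forall i : 'I_n, 'M[R]_(q i)) (pT : forall i, psd (T i))
  (Z : forall i, Om -> smx R (q i)) (pdZ : forall i w, pd (Z i w)) :
  (\int[P]_w (\prod_(i < n) etrf (T i) (Z i w))%:E < +oo)%E.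
Proof.
apply: (@le_lt_trans _ _ (\int[P]_w (cst 1%E) w)%E).
  apply: le_integral_nm => w _; rewrite lee_fin.
    by apply: prodr_ge0 => i _; case/andP: (etr_le1 (pT i) (pdZ i w)).
  by apply: prodr_ile1 => i _; exact: etr_le1.
have P1 : P setT = 1%E := probability_setT P.
rewrite integral_cst // mul1e; move: P1 => /= ->; exact: ltry.
Qed.

Unset Implicit Arguments.
Set Strict Implicit.

Theorem proposition3p1 (R : realType)
    (d : measure_display) (Omega : measurableType d) (P : probability Omega R)
    (d' : measure_display) (Omega' : measurableType d') (P' : probability Omega' R)
    (n : nat) (q : 'I_n -> nat)
    (X : forall i : 'I_n, Omega -> smx R (q i))
    (Y : forall i : 'I_n, Omega' -> smx R (q i))
    (mX : forall i, random_mx (X i)) (mY : forall i, random_mx (Y i))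
    (pdX : forall i w, pd (X i w)) (pdY : forall i w, pd (Y i w)) :
  lt_order P P' X Y <->
  (forall phi : forall i : 'I_n, 'M[R]_(q i) -> R,
     (forall i, mx_completely_monotone (phi i)) ->
     (\int[P]_w (\prod_(i < n) phi i (X i w))%:E < +oo)%E ->
     (\int[P']_w (\prod_(i < n) phi i (Y i w))%:E < +oo)%E ->
     (\int[P']_w (\prod_(i < n) phi i (Y i w))%:E <=
      \int[P]_w (\prod_(i < n) phi i (X i w))%:E)%E).
Proof.
split.
  move=> lt phi Hphi _ _.
  apply: (@main_ind R n q d Omega P d' Omega' P' X Y mX mY pdX pdY _ n (leqnn n) phi).
    by move=> T pT; exact: lt T pT.
  split => i; first by move=> _; exact: Hphi.
  by rewrite leqNgt ltn_ord.
move=> H T pT.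
pose phi := fun i => etrf (T i).
have cm : forall i, mx_completely_monotone (phi i).
  move=> i; exists (@dirac _ (smx R (q i)) (T i) R) => S pS.
  rewrite integral_dirac; first last.
  - apply/measurable_EFinP; apply: measurable_funTS; apply: etr_meas.
    apply: mxmeas_opp; apply: mxmeas_mul; first exact: mxmeas_cst.
    exact: mxmeas_smx.
  - exact: psd_meas.
  by rewrite diracE mem_set // mul1e /phi /etrf etr_C.
exact: (H phi cm (fin_etr P pT pdX) (fin_etr P' pT pdY)).
Qed.
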